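(* Let $f:2^{\mathcal{E}_x}\to\mathbb{R}_{\ge 0}$ be normalized, monotone and submodular, let $\Delta\ge1$ be the maximum vertex degree of $\mathcal{G}$, and consider $(\mathrm{P}_1)$ under the constraint TU$_b$ (maximize $f(\mathcal{E})$ over $\mathcal{E}\subseteq\mathcal{E}_x$ with $|\mathcal{E}|\le k$ and some vertex cover $\mathcal{V}$ of $\mathcal{E}$ with $|\mathcal{V}|\le b$), with optimal value $\mathrm{OPT}_1$. The algorithm Submodular-Greedy, which runs both Edge-Greedy and Vertex-Greedy and returns whichever of the two returned edge sets has the larger $f$-value, returns a feasible solution with value at least $\alpha(b,k,\Delta)\cdot\mathrm{OPT}_1$, where $\alpha(b,k,\Delta)=1-\exp(-\min\{1,\gamma\})$ and $\gamma=\max\{b/k,\ \lfloor k/\Delta\rfloor/b\}$.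
   Context: $\mathcal{G}=(\mathcal{V}_x,\mathcal{E}_x)$ is a finite simple undirected graph; $b,k\ge1$ are integers. For $\mathcal{V}\subseteq\mathcal{V}_x$, $\mathsf{edges}(\mathcal{V})$ is the set of edges incident to at least one vertex of $\mathcal{V}$. A set function $h$ is normalized if $h(\varnothing)=0$, monotone if $h(A)\le h(B)$ for $A\subseteq B$, submodular if $h(A)+h(B)\ge h(A\cup B)+h(A\cap B)$. Edge-Greedy: Phase I: start with $\mathcal{E}_{\mathrm{grd}}=\varnothing$; for $\min(b,k)$ iterations (or until no edges remain), add an edge $e^\star\in\arg\max_{e\in\mathcal{E}_x\setminus\mathcal{E}_{\mathrm{grd}}}f(\mathcal{E}_{\mathrm{grd}}\cup\{e\})$; then let $\mathcal{V}_{\mathrm{grd}}$ be a vertex cover of $\mathcal{E}_{\mathrm{grd}}$ obtained by choosing one endpoint of each selected edge. Phase II (only if $k>b$): let $\mathcal{E}_{\mathrm{free}}=\mathsf{edges}(\mathcal{V}_{\mathrm{grd}})\setminus\mathcal{E}_{\mathrm{grd}}$; for $\min(|\mathcal{E}_{\mathrm{free}}|,k-b)$ iterations add $e^\star\in\arg\max_{e\in\mathcal{E}_{\mathrm{free}}\setminus\mathcal{E}_{\mathrm{grd}}}f(\mathcal{E}_{\mathrm{grd}}\cup\{e\})$; return $\mathcal{E}_{\mathrm{grd}}$. Vertex-Greedy: with $h(\mathcal{V})=f(\mathsf{edges}(\mathcal{V}))$, start with $\mathcal{V}_{\mathrm{grd}}=\varnothing$ and repeat: pick $v^\star\in\arg\max_{v\in\mathcal{V}_x\setminus\mathcal{V}_{\mathrm{grd}}}h(\mathcal{V}_{\mathrm{grd}}\cup\{v\})$;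 if $|\mathcal{V}_{\mathrm{grd}}\cup\{v^\star\}|>b$ or $|\mathsf{edges}(\mathcal{V}_{\mathrm{grd}}\cup\{v^\star\})|>k$ (or no vertex remains), stop; else add $v^\star$ to $\mathcal{V}_{\mathrm{grd}}$. Return $\mathsf{edges}(\mathcal{V}_{\mathrm{grd}})$. *)

(* Defs.v *)
From Stdlib Require Import Reals.
From mathcomp Require Import all_boot.

Set Implicit Arguments.
Unset Strict Implicit.
Unset Printing Implicit Defensive.

(* The edge set E_x is [set: E]. *)
Definition simple_graph (V E : finType) (src dst : E -> V) : Prop :=
  (forall e, src e != dst e) /\
  (forall e1 e2, [set src e1; dst e1] = [set src e2; dst e2] -> e1 = e2).

Section Graph.
Variables (V E : finType) (src dst : E -> V).

Definition edges (S : {set V}) : {set E} :=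
  [set e | (src e \in S) || (dst e \in S)].

Definition degree (v : V) : nat := #|[set e | (src e == v) || (dst e == v)]|.
Definition max_degree : nat := \max_(v : V) degree v.

Definition vertex_cover (C : {set V}) (F : {set E}) : Prop :=
  forall e, e \in F -> (src e \in C) \/ (dst e \in C).

Definition TU_feasible (b k : nat) (F : {set E}) : Prop :=
  #|F| <= k /\ exists C : {set V}, vertex_cover C F /\ #|C| <= b.

Definition normalized (f : {set E} -> R) : Prop := f set0 = R0.
Definition nonnegative (f : {set E} -> R) : Prop := forall A, Rle R0 (f A).
Definition monotone (f : {set E} -> R) : Prop :=
  forall A B : {set E}, A \subset B -> Rle (f A) (f B).
Definition submodular (f : {set E} -> R) : Prop :=
  forall A B : {set E}, Rle (Rplus (f (A :|: B)) (f (A :&: B))) (Rplus (f A) (f B)).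

(* greedy_run f D n S0 S : S is a possible result (under any tie-breaking)
   of n greedy iterations starting from S0, each adding an element
   e \in D \ S maximizing f (S ∪ {e}). *)
Inductive greedy_run (f : {set E} -> R) (D : {set E}) :
    nat -> {set E} -> {set E} -> Prop :=
| greedy_run0 S0 : greedy_run f D 0 S0 S0
| greedy_runS n S0 S e :
    greedy_run f D n S0 S ->
    e \in D :\: S ->
    (forall e', e' \in D :\: S -> Rle (f (e' |: S)) (f (e |: S))) ->
    greedy_run f D n.+1 S0 (e |: S).

Definition endpoint_choice (Egrd : {set E}) (Vgrd : {set V}) : Prop :=
  exists g : E -> V,
    (forall e, e \in Egrd -> g e = src e \/ g e = dst e) /\ Vgrd = g @: Egrd.

Definition edge_greedy_output (f : {set E} -> R) (b k : nat) (Eout : {set E})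
  : Prop :=
  exists E1 : {set E},
    greedy_run f [set: E] (minn (minn b k) #|[set: E]|) set0 E1 /\
    if b < k then
      exists Vgrd : {set V},
        endpoint_choice E1 Vgrd /\
        let Efree := edges Vgrd :\: E1 in
        greedy_run f Efree (minn #|Efree| (k - b)) E1 Eout
    else Eout = E1.

Definition h (f : {set E} -> R) (S : {set V}) : R := f (edges S).

Definition vg_argmax (f : {set E} -> R) (S : {set V}) (v : V) : Prop :=
  v \notin S /\ forall w, w \notin S -> Rle (h f (w |: S)) (h f (v |: S)).

Inductive vg_reach (f : {set E} -> R) (b k : nat) : {set V} -> Prop :=
| vg_reach0 : vg_reach f b k set0
| vg_reachS S v :
    vg_reach f b k S -> vg_argmax f S v ->
    #|v |: S| <= b -> #|edges (v |: S)| <= k ->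
    vg_reach f b k (v |: S).

(* Eout is a possible output of Vertex-Greedy: the loop stops at state S
   either because no vertex remains or because the chosen maximizer v*
   violates one of the two budgets. *)
Definition vertex_greedy_output (f : {set E} -> R) (b k : nat) (Eout : {set E})
  : Prop :=
  exists S : {set V},
    vg_reach f b k S /\
    (S = [set: V] \/
     exists v, vg_argmax f S v /\
               (b < #|v |: S| \/ k < #|edges (v |: S)|)) /\
    Eout = edges S.

End Graph.

Definition gamma_ratio (b k Delta : nat) : R :=
  Rmax (Rdiv (INR b) (INR k)) (Rdiv (INR (k %/ Delta)) (INR b)).
Definition alpha_ratio (b k Delta : nat) : R :=
  Rminus R1 (exp (Ropp (Rmin R1 (gamma_ratio b k Delta)))).

(* Main.v *)
Require Import Defs.
From Stdlib Require Import Reals Lra.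
From mathcomp Require Import all_boot.

Section Greedy.
Local Open Scope R_scope.
Variable T : finType.
Variable g : {set T} -> R.
Hypothesis gmono : forall A B : {set T}, A \subset B -> g A <= g B.
Hypothesis gsub : forall A B : {set T}, g (A :|: B) + g (A :&: B) <= g A + g B.

Lemma marg (S X : {set T}) a : S \subset X -> g (a |: X) - g X <= g (a |: S) - g S.
Proof.
move=> SX.
have H1 := gsub (a |: S) X.
have H2 : g S <= g ((a |: S) :&: X).
  apply: gmono; by rewrite subsetI subsetUr SX.
move: H1; rewrite -setUA (setUidPr SX) => H1.
lra.
Qed.

Lemma union_bound n : forall (A S : {set T}) d, #|A| = n -> 0 <= d ->
  (forall a, a \in A -> g (a |: S) - g S <= d) -> g (A :|: S) <= g S + INR n * d.
Proof.
elim: n => [|n IH] A S d hA hd hm.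
  move/eqP: hA; rewrite cards_eq0 => /eqP ->; rewrite set0U /=; lra.
have : (0 < #|A|)%N by rewrite hA.
case/card_gt0P => a aA.
have hA' : #|A :\ a| = n.
  by move: hA; rewrite (cardsD1 a A) aA add1n => -[].
have IH' := IH (A :\ a) S d hA' hd (fun x xA => hm x (subsetP (subsetDl A [set a]) x xA)).
have EA : A :|: S = a |: ((A :\ a) :|: S).
  by rewrite setUA setD1K.
have hmg := @marg S (A :\ a :|: S) a (subsetUr (A :\ a) S).
have ha := hm a aA.
rewrite EA S_INR.
lra.
Qed.

Lemma step (O S : {set T}) (e : T) (m : nat) : (0 < m)%N -> (#|O| <= m)%N ->
  (forall a, a \in O -> a \notin S -> g (a |: S) <= g (e |: S)) ->
  g O - g (e |: S) <= (1 - / INR m) * (g O - g S).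
Proof.
move=> m0 Om hO.
set d := g (e |: S) - g S.
have hd : 0 <= d by rewrite /d; have := @gmono _ _ (subsetUr [set e] S); lra.
have hb := @union_bound #|O| O S d (erefl _) hd.
have hb' : g (O :|: S) <= g S + INR #|O| * d.
  apply: hb => a aO.
  case: (boolP (a \in S)) => aS.
    rewrite (setUidPr _); last by rewrite sub1set.
    lra.
  have := hO a aO aS; rewrite /d; lra.
have hOS := @gmono _ _ (subsetUl O S).
have hM : INR #|O| <= INR m by apply: le_INR; apply/leP.
have hM0 : 0 < INR m by apply: lt_0_INR; apply/ltP.
have h1 : g O - g S <= INR m * d.
  have : INR #|O| * d <= INR m * d by apply: Rmult_le_compat_r.
  lra.
have h2 : (g O - g S) * / INR m <= d.
  apply: (Rle_trans _ (INR m * d * / INR m)).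
    apply: Rmult_le_compat_r => //; left; apply: Rinv_0_lt_compat; lra.
  right; field; lra.
replace ((1 - / INR m) * (g O - g S)) with ((g O - g S) - (g O - g S) * / INR m) by ring.
rewrite /d in h2; lra.
Qed.

End Greedy.

Section Greedy2.
Local Open Scope R_scope.

Lemma greedy_bound (E : finType) (f : {set E} -> R) (D O : {set E}) (m n : nat) (S0 S : {set E}) :
  (forall A B : {set E}, A \subset B -> f A <= f B) ->
  (forall A B : {set E}, f (A :|: B) + f (A :&: B) <= f A + f B) ->
  (0 < m)%N -> (#|O| <= m)%N -> O \subset D ->
  greedy_run f D n S0 S -> f O - f S <= (1 - / INR m) ^ n * (f O - f S0).
Proof.
move=> fm fs m0 Om OD; elim => [S1|k S1 S2 e _ IH eD he] /=.
  lra.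
have hc : 0 <= 1 - / INR m.
  have : 1 <= INR m by apply: (le_INR 1); apply/leP.
  move=> h1; have : / INR m <= 1.
    rewrite -Rinv_1; apply: Rinv_le_contravar; lra.
  lra.
apply: (Rle_trans _ _ _ (@step _ f fm fs O S2 e m m0 Om _)).
  move=> a aO aS; apply: he; rewrite inE aS /=; exact: (subsetP OD).
rewrite Rmult_assoc; apply: Rmult_le_compat_l => //.
Qed.

Lemma pow_exp_bound m n : (0 < m)%N ->
  (1 - / INR m) ^ n <= exp (- (INR n / INR m)).
Proof.
move=> m0.
have hM : 1 <= INR m by apply: (le_INR 1); apply/leP.
have hc : 0 <= 1 - / INR m.
  have : / INR m <= 1 by rewrite -Rinv_1; apply: Rinv_le_contravar; lra.
  lra.
have h1 : 1 - / INR m <= exp (- / INR m) by have := exp_ineq1_le (- / INR m); lra.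
elim: n => [|n IH] /=.
  rewrite /Rdiv Rmult_0_l Ropp_0 exp_0; lra.
have -> : - (INR n.+1 / INR m) = - / INR m + - (INR n / INR m).
  rewrite S_INR; field; lra.
rewrite exp_plus; apply: Rmult_le_compat => //.
  apply: pow_le => //.
Qed.

Lemma exp_le_mono x y : x <= y -> exp x <= exp y.
Proof. case => [h|->]; [left; exact: exp_increasing | lra]. Qed.

Lemma final_bound G y c t s : 0 <= G -> G - y <= c * G -> c <= exp (- t) -> s <= t ->
  (1 - exp (- s)) * G <= y.
Proof.
move=> G0 h hc st.
have : exp (- t) <= exp (- s) by apply: exp_le_mono; lra.
move=> he.
have : c * G <= exp (- s) * G by apply: Rmult_le_compat_r => //; lra.
lra.
Qed.

End Greedy2.
Section GraphL.
Variables (V E : finType) (src dst : E -> V).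

Lemma edges_mono (A B : {set V}) : A \subset B -> edges src dst A \subset edges src dst B.
Proof.
move=> AB; apply/subsetP => e; rewrite !inE => /orP [] h; apply/orP.
  by left; exact: (subsetP AB).
by right; exact: (subsetP AB).
Qed.

Lemma edgesU (A B : {set V}) : edges src dst (A :|: B) = edges src dst A :|: edges src dst B.
Proof.
apply/setP => e; rewrite !inE.
by case: (src e \in A); case: (src e \in B); case: (dst e \in A); case: (dst e \in B).
Qed.

Lemma edgesI (A B : {set V}) : edges src dst (A :&: B) \subset edges src dst A :&: edges src dst B.
Proof. by rewrite subsetI !edges_mono // ?subsetIl ?subsetIr. Qed.

Lemma edges0 : edges src dst set0 = set0.
Proof. by apply/setP => e; rewrite !inE. Qed.

Lemma edgesT : edges src dst setT = setT.
Proof. by apply/setP => e; rewrite !inE. Qed.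

Lemma card_edges (A : {set V}) : (#|edges src dst A| <= #|A| * max_degree src dst)%N.
Proof.
move: {2}#|A| (erefl #|A|) => n; elim: n A => [|n IH] A hA.
  move/eqP: hA; rewrite cards_eq0 => /eqP ->.
  by rewrite edges0 cards0.
have : (0 < #|A|)%N by rewrite hA.
case/card_gt0P => a aA.
have EA : A = a |: (A :\ a) by rewrite setD1K.
have hA' : #|A :\ a| = n by move: hA; rewrite (cardsD1 a A) aA add1n => -[].
rewrite hA EA edgesU.
have -> : edges src dst [set a] = [set e | (src e == a) || (dst e == a)].
  by apply/setP => e; rewrite !inE.
rewrite mulSn.
apply: (leq_trans (leq_card_setU _ _)).
apply: leq_add.
  exact: (leq_bigmax (F := fun v => degree src dst v) a).
by rewrite -hA'; apply: IH.
Qed.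

Lemma cover_sub (C : {set V}) (F : {set E}) : vertex_cover src dst C F -> F \subset edges src dst C.
Proof.
move=> hc; apply/subsetP => e eF; rewrite inE.
by case: (hc e eF) => ->; rewrite ?orbT.
Qed.

End GraphL.

Lemma greedy_facts (E : finType) (f : {set E} -> R) (D : {set E}) n S0 S :
  greedy_run f D n S0 S -> [/\ S0 \subset S, S \subset S0 :|: D & #|S| = (#|S0| + n)%N].
Proof.
elim => [S1|k S1 S2 e _ [h1 h2 h3] eD _].
  by rewrite subxx subsetUl addn0.
move: eD; rewrite inE => /andP [eS eD].
split.
- exact: (subset_trans h1 (subsetUr _ _)).
- rewrite subUset h2 andbT sub1set inE eD orbT //.
- by rewrite cardsU1 eS h3 addnS.
Qed.

Section Vert.
Local Open Scope R_scope.
Variables (V E : finType) (src dst : E -> V) (f : {set E} -> R).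
Hypothesis fm : forall A B : {set E}, A \subset B -> f A <= f B.
Hypothesis fs : forall A B : {set E}, f (A :|: B) + f (A :&: B) <= f A + f B.

Lemma h_mono (A B : {set V}) : A \subset B -> h src dst f A <= h src dst f B.
Proof. move=> AB; apply: fm; apply: edges_mono; exact AB. Qed.

Lemma h_sub (A B : {set V}) : h src dst f (A :|: B) + h src dst f (A :&: B) <= h src dst f A + h src dst f B.
Proof.
rewrite /h edgesU.
have := fs (edges src dst A) (edges src dst B).
have := @fm _ _ (@edgesI _ _ src dst A B).
lra.
Qed.

Lemma vg_facts b k S : vg_reach src dst f b k S ->
  (#|S| <= b)%N /\ (#|edges src dst S| <= k)%N.
Proof.
elim => [|S1 v _ _ _ h1 h2]; last by split.
by rewrite edges0 !cards0.
Qed.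

Lemma vg_bound b k (C : {set V}) S : (0 < b)%N -> (#|C| <= b)%N ->
  vg_reach src dst f b k S ->
  h src dst f C - h src dst f S <= (1 - / INR b) ^ #|S| * (h src dst f C - h src dst f set0).
Proof.
move=> b0 Cb.
elim => [|S1 v _ IH [vS hv] _ _].
  rewrite cards0 /=; lra.
have hc : 0 <= 1 - / INR b.
  have : 1 <= INR b by apply: (le_INR 1); apply/leP.
  move=> h1; have : / INR b <= 1.
    rewrite -Rinv_1; apply: Rinv_le_contravar; lra.
  lra.
rewrite cardsU1 vS add1n /=.
apply: (Rle_trans _ _ _ (@step _ (h src dst f) h_mono h_sub C S1 v b b0 Cb _)).
  by move=> a _ aS; apply: hv.
rewrite Rmult_assoc; apply: Rmult_le_compat_l => //.
Qed.

End Vert.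

Arguments greedy_facts {E f D n S0 S}.
Arguments greedy_bound {E f D O m n S0 S}.
Arguments final_bound {G y c t s}.
Arguments vg_facts {V E src dst f b k S}.
Arguments vg_bound {V E src dst f} fm fs {b k C S}.
Arguments cover_sub {V E src dst C F}.

Section Main.
Local Open Scope R_scope.

Lemma factor_le1 (z G : R) : (0 <= G) -> ((1 - exp z) * G <= G).
Proof. move=> G0; have := exp_pos z; nra. Qed.

Lemma theorem3_aux (V E : finType) (src dst : E -> V)
  (f : {set E} -> R) (b k : nat) (Ee Ev : {set E}) :
  simple_graph src dst ->
  (0 < b)%N -> (0 < k)%N ->
  normalized f -> nonnegative f -> monotone f -> submodular f ->
  (0 < max_degree src dst)%N ->
  edge_greedy_output src dst f b k Ee ->
  vertex_greedy_output src dst f b k Ev ->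
  let Eout := if Rle_dec (f Ev) (f Ee) then Ee else Ev in
  TU_feasible src dst b k Eout /\
  (forall F : {set E}, TU_feasible src dst b k F ->
     Rle (Rmult (alpha_ratio b k (max_degree src dst)) (f F)) (f Eout)).
Proof.
move=> _ b0 k0 fn f0 fm fs D0 [E1 [hrun hph]] [S [hreach [hstop hEv]]] Eout.
have [fE1a fE1b fE1c] := greedy_facts hrun.
rewrite sub0set cards0 add0n in fE1a fE1c.
have E1b : (#|E1| <= b)%N by rewrite fE1c; apply: (leq_trans (geq_minl _ _)); exact: geq_minl.
have E1k : (#|E1| <= k)%N by rewrite fE1c; apply: (leq_trans (geq_minl _ _)); exact: geq_minr.
have feasEe : TU_feasible src dst b k Ee.
  case: ltnP hph => bk.
    case=> Vg [[g [hg ->]] hrun2].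
    have [h1 h2 h3] := greedy_facts hrun2.
    split.
      rewrite h3.
      apply: (@leq_trans (b + (k - b))%N); last by rewrite subnKC // ltnW.
      apply: leq_add => //; exact: geq_minr.
    exists (g @: E1); split; last exact: (leq_trans (leq_imset_card _ _) E1b).
    move=> e eEe.
    move: (subsetP h2 e eEe); rewrite !inE => /orP [eE1|/andP [_ he]].
      by case: (hg e eE1) => <-; [left|right]; apply: imset_f.
    by case/orP: he => ->; [left|right].
  move=> ->; split => //.
  exists (src @: E1); split; last exact: (leq_trans (leq_imset_card _ _) E1b).
  by move=> e eE; left; apply: imset_f.
have feasEv : TU_feasible src dst b k Ev.
  have [h1 h2] := vg_facts hreach.
  rewrite hEv; split => //; exists S; split => // e; rewrite inE => /orP [] ->; by [left|right].
split.
  by rewrite /Eout; case: Rle_dec.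
move=> F [Fk [C [Ccov Cb]]].
have fF0 := f0 F.
have hEout : (f Ee <= f Eout /\ f Ev <= f Eout).
  by rewrite /Eout; case: Rle_dec => ? /=; split; lra.
have INb : (0 < INR b) by apply: lt_0_INR; apply/ltP.
have INk : (0 < INR k) by apply: lt_0_INR; apply/ltP.
have edgeB : ((1 - exp (- Rmin 1 (INR b / INR k))) * f F <= f Ee).
  have fE1Ee : (f E1 <= f Ee).
    case: ltnP hph => bk; last by move=> ->; lra.
    case=> Vg [_ hrun2]; have [h1 _ _] := greedy_facts hrun2; exact: fm.
  case: (leqP (minn b k) #|[set: E]|) => hn.
    have hg := greedy_bound fm fs k0 Fk (subsetT F) hrun.
    rewrite fn (minn_idPl hn) in hg.
    have hp := pow_exp_bound k (minn b k) k0.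
    have : (Rmin 1 (INR b / INR k) <= INR (minn b k) / INR k).
      case: (leqP b k) => bk.
        exact: Rmin_r.
      apply: (Rle_trans _ 1); first exact: Rmin_l.
      right; field; lra.
    move=> hst.
    have := final_bound fF0 _ hp hst.
    move=> H; apply: (Rle_trans _ (f E1)) => //; apply: H; lra.
  have E1T : E1 = setT.
    apply/eqP; rewrite eqEcard subsetT fE1c (minn_idPr (ltnW hn)) /= leqnn //.
  apply: (Rle_trans _ (f F)); first exact: factor_le1.
  rewrite E1T in fE1Ee; have := fm F setT (subsetT F); lra.
have vertB : ((1 - exp (- Rmin 1 (INR (k %/ max_degree src dst) / INR b))) * f F <= f Ev).
  have hFC : (f F <= h src dst f C) by apply: fm; exact: cover_sub.
  have hC0 : (0 <= h src dst f C) by apply: f0.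
  rewrite hEv.
  case: hstop => [->|[v [_ hv]]].
    apply: (Rle_trans _ (f F)); first exact: factor_le1.
    rewrite edgesT; apply: fm; exact: subsetT.
  have hb := vg_bound fm fs b0 Cb hreach.
  rewrite /h edges0 fn in hb.
  have hp := pow_exp_bound b #|S| b0.
  have hst : (Rmin 1 (INR (k %/ max_degree src dst) / INR b) <= INR #|S| / INR b).
    have hS1 : (#|v |: S| <= #|S|.+1)%N by rewrite cardsU1; case: (v \notin S).
    case: hv => hv.
      apply: (Rle_trans _ 1); first exact: Rmin_l.
      have : (b <= #|S|)%N by rewrite -ltnS; exact: (leq_trans hv hS1).
      move/leP/le_INR => H.
      apply: (Rle_trans _ (INR b / INR b)); first by right; field; lra.
      apply: Rmult_le_compat_r => //; left; apply: Rinv_0_lt_compat; lra.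
    apply: (Rle_trans _ _ _ (Rmin_r _ _)).
    have : (k %/ max_degree src dst <= #|S|)%N.
      rewrite -ltnS ltn_divLR //.
      apply: (leq_trans hv); apply: (leq_trans (card_edges V E src dst (v |: S))).
      by rewrite leq_mul2r hS1 orbT.
    move/leP/le_INR => H.
    apply: Rmult_le_compat_r => //; left; apply: Rinv_0_lt_compat; lra.
  have H := final_bound hC0 _ hp hst.
  apply: (Rle_trans _ ((1 - exp (- Rmin 1 (INR (k %/ max_degree src dst) / INR b))) * h src dst f C)).
    apply: Rmult_le_compat_l => //.
    have : (exp (- Rmin 1 (INR (k %/ max_degree src dst) / INR b)) <= 1).
      apply: (Rle_trans _ (exp 0)); last by rewrite exp_0; lra.
      apply: exp_le_mono.
      have : (0 <= INR (k %/ max_degree src dst) / INR b).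
        apply: Rmult_le_pos; [exact: pos_INR | left; apply: Rinv_0_lt_compat; lra].
      move=> h0; have : 0 <= Rmin 1 (INR (k %/ max_degree src dst) / INR b).
        by apply: Rmin_glb => //; lra.
      lra.
    lra.
  apply: H; rewrite /h; lra.
rewrite /alpha_ratio /gamma_ratio; change R1 with 1.
case: (Rle_dec (INR b / INR k) (INR (k %/ max_degree src dst) / INR b)) => hxy.
  rewrite Rmax_right //; lra.
rewrite Rmax_left; [lra | lra].
Qed.

End Main.

Theorem theorem3 (V E : finType) (src dst : E -> V)
  (f : {set E} -> R) (b k : nat) (Ee Ev : {set E}) :
  simple_graph src dst ->
  0 < b -> 0 < k ->
  normalized f -> nonnegative f -> monotone f -> submodular f ->
  0 < max_degree src dst ->
  edge_greedy_output src dst f b k Ee ->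
  vertex_greedy_output src dst f b k Ev ->
  let Eout := if Rle_dec (f Ev) (f Ee) then Ee else Ev in
  TU_feasible src dst b k Eout /\
  (forall F : {set E}, TU_feasible src dst b k F ->
     Rle (Rmult (alpha_ratio b k (max_degree src dst)) (f F)) (f Eout)).
Proof. exact: theorem3_aux. Qed.
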